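(* Suppose $H$ is an $\alpha$-Erdős–Simonovits good graph for some $0\leq \alpha<1$, and let $H^*$ be formed by taking $s$ copies of $H$ and gluing them along an edge $f$ of $H$. Then there is a constant $C$ such that for all $n$, $$\mathrm{ex}(n, H) \leq \mathrm{ex}(n, H^* ) \leq C n^{1 + \alpha}.$$
   Context: A graph $H$ is $(\alpha, C, \beta)$-Erdős–Simonovits good if every $n$-vertex graph $G$ with $pn^2\geq Cn^{1 + \alpha}$ edges contains at least $\beta p^{\mathrm{e}(H)}n^{v(H)}$ copies of $H$; it is $\alpha$-Erdős–Simonovits good if this holds for some positive constants $C,\beta$. Gluing $s$ copies of $H$ along the edge $f$ means taking $s$ copies of $H$ that are pairwise vertex-disjoint except that the copies of the (labeled) edge $f$ are identified into a single edge, endpoint to corresponding endpoint. $\mathrm{ex}(n,H)$ is the Turán number. *)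

(* Defs.v *)
From HB Require Import structures.
From mathcomp Require Import all_boot all_order all_algebra.
From mathcomp Require Import reals exp.
Set Implicit Arguments. Unset Strict Implicit. Unset Printing Implicit Defensive.
Import Order.TTheory GRing.Theory Num.Theory.
Local Open Scope ring_scope.

Definition simple_graph (T : finType) (E : {set T * T}) : bool :=
  [forall x, (x, x) \notin E] &&
  [forall x, forall y, ((x, y) \in E) ==> ((y, x) \in E)].

Definition nedges (T : finType) (E : {set T * T}) : nat := (#|E| %/ 2)%N.

Definition is_emb (V W : finType) (EH : {set V * V}) (EG : {set W * W})
    (f : {ffun V -> W}) : bool :=
  injectiveb f && [forall x, forall y, ((x, y) \in EH) ==> ((f x, f y) \in EG)].

Definition ncopies (V W : finType) (EH : {set V * V}) (EG : {set W * W}) : nat :=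
  #|[set f : {ffun V -> W} | is_emb EH EG f]|.

Definition contains (V W : finType) (EG : {set W * W}) (EH : {set V * V}) : bool :=
  (0 < ncopies EH EG)%N.

Definition turan (V : finType) (EH : {set V * V}) (n : nat) : nat :=
  \max_(E : {set 'I_n * 'I_n} | simple_graph E && ~~ contains E EH) nedges E.

Definition ES_good_with (R : realType) (V : finType) (EH : {set V * V})
    (alpha C beta : R) : Prop :=
  forall (n : nat) (EG : {set 'I_n * 'I_n}), (0 < n)%N -> simple_graph EG ->
    C * powR (n%:R) (1 + alpha) <= (nedges EG)%:R ->
    beta * ((nedges EG)%:R / (n%:R ^+ 2)) ^+ nedges EH * n%:R ^+ #|V|
      <= (ncopies EH EG)%:R.

Definition ES_good (R : realType) (V : finType) (EH : {set V * V}) (alpha : R) : Prop :=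
  exists C beta : R, 0 < C /\ 0 < beta /\ ES_good_with EH alpha C beta.

(* Gluing s copies of H along the labelled edge f = (a, b).
   Vertices: pairs (i, x) (copy i, vertex x of H); the endpoints a, b are
   shared, represented canonically by copy 0. *)
Definition glue_canon (V : finType) (s : nat) (a b : V) (v : 'I_s * V) : bool :=
  ((v.2 != a) && (v.2 != b)) || (val v.1 == 0%N).

Definition glueV (V : finType) (s : nat) (a b : V) : finType :=
  {v : 'I_s * V | glue_canon a b v}.

Definition glueE (V : finType) (s : nat) (a b : V) (EH : {set V * V})
  : {set glueV s a b * glueV s a b} :=
  [set uv : glueV s a b * glueV s a b |
     let u := val uv.1 in let v := val uv.2 in
     ((u.2, v.2) \in EH) &&
     [|| u.1 == v.1, u.2 == a, u.2 == b, v.2 == a | v.2 == b]].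

(* Main.v *)
Require Import Defs.
From HB Require Import structures.
From mathcomp Require Import all_boot all_order all_algebra.
From mathcomp Require Import reals exp.
From mathcomp Require Import zify ring lra.
Import Order.TTheory GRing.Theory Num.Theory.
Set Implicit Arguments. Unset Strict Implicit. Unset Printing Implicit Defensive.

Lemma extend_emb (V W : finType) (N : {set V}) (X : {set W}) (phi : {ffun V -> W}) :
  #|X| + 2 * #|V| <= #|W| -> {in N &, injective phi} ->
  exists phi' : {ffun V -> W}, (forall x, x \in N -> phi' x = phi x) /\
    (forall x, x \notin N -> phi' x \notin X) /\ injective phi'.
Proof.
move=> hc hinj.
set X' := X :|: phi @: N.
have hX' : #|X'| <= #|X| + #|V|.
  rewrite /X' (leq_trans (leq_card_setU _ _)) // leq_add2l.
  apply: leq_trans (leq_imset_card _ _) _; exact: max_card.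
have hsz : #|~: N| <= #|~: X'|.
  have h1 := cardsC N; have h2 := cardsC X'; have h3 := max_card (~: N).
  lia.
pose phi' := [ffun x => if x \in N then phi x
   else nth (phi x) (enum (~: X')) (index x (enum (~: N)))].
have hout : forall x, x \notin N -> phi' x \notin X'.
  move=> x hx; rewrite /phi' ffunE (negbTE hx).
  have : nth (phi x) (enum (~: X')) (index x (enum (~: N))) \in enum (~: X').
    apply: mem_nth; rewrite -cardE (leq_trans _ hsz) // cardE index_mem mem_enum inE //.
  by rewrite mem_enum inE.
exists phi'; split; first by move=> x hx; rewrite /phi' ffunE hx.
split.
  move=> x hx; apply: contra (hout x hx); rewrite /X' inE => ->; done.
move=> x y.
case hx: (x \in N); case hy: (y \in N).
- by rewrite /phi' !ffunE hx hy; apply: hinj.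
- move=> e; have := hout y (negbT hy); rewrite -e /phi' ffunE hx /X' inE.
  by rewrite (imset_f phi hx) orbT.
- move=> e; have := hout x (negbT hx); rewrite e /phi' ffunE hy /X' inE.
  by rewrite (imset_f phi hy) orbT.
rewrite /phi' !ffunE hx hy => e.
have ix : index x (enum (~: N)) < size (enum (~: N)) by rewrite index_mem mem_enum inE hx.
have iy : index y (enum (~: N)) < size (enum (~: N)) by rewrite index_mem mem_enum inE hy.
have szle : size (enum (~: N)) <= size (enum (~: X')) by rewrite -!cardE.
move: e; rewrite (set_nth_default (phi y) (phi x)); last exact: leq_trans ix szle.
move/eqP; rewrite nth_uniq ?enum_uniq //; try exact: leq_trans _ szle.
move/eqP=> e.
have hxm : x \in enum (~: N) by rewrite mem_enum inE hx.
have hym : y \in enum (~: N) by rewrite mem_enum inE hy.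
by rewrite -(nth_index x hxm) e nth_index.
Qed.

Definition thru (V W : finType) (EH : {set V * V}) (EG : {set W * W}) (a b : V)
  (u w : W) (phi : {ffun V -> W}) : bool :=
  [&& is_emb EH EG phi, phi a == u & phi b == w].

Definition NH (V : finType) (EH : {set V * V}) : {set V} :=
  [set x | [exists y, (x, y) \in EH]].

Definition hitsN (V W : finType) (EH : {set V * V}) (Y : {set W}) (phi : {ffun V -> W}) : bool :=
  [exists x in NH EH, phi x \in Y].

Lemma is_embP (V W : finType) (EH : {set V * V}) (EG : {set W * W}) (phi : {ffun V -> W}) :
  is_emb EH EG phi -> injective phi /\ forall x y, (x, y) \in EH -> (phi x, phi y) \in EG.
Proof.
case/andP=> /injectiveP hi /forallP he; split => // x y hxy.
by have /forallP/(_ y)/implyP := he x; apply.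
Qed.

Lemma is_embI (V W : finType) (EH : {set V * V}) (EG : {set W * W}) (phi : {ffun V -> W}) :
  injective phi -> (forall x y, (x, y) \in EH -> (phi x, phi y) \in EG) -> is_emb EH EG phi.
Proof.
move=> hi he; apply/andP; split; first by apply/injectiveP.
by apply/forallP=> x; apply/forallP=> y; apply/implyP; apply: he.
Qed.

Lemma simple_sym (T : finType) (E : {set T * T}) x y :
  simple_graph E -> (x, y) \in E -> (y, x) \in E.
Proof.
by case/andP=> _ /forallP/(_ x)/forallP/(_ y)/implyP.
Qed.

Lemma simple_irr (T : finType) (E : {set T * T}) x :
  simple_graph E -> (x, x) \notin E.
Proof. by case/andP=> /forallP/(_ x). Qed.

Lemma NH_l (V : finType) (EH : {set V * V}) x y : (x, y) \in EH -> x \in NH EH.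
Proof. by move=> h; rewrite inE; apply/existsP; exists y. Qed.

Lemma thru_ne (V W : finType) (EH : {set V * V}) (EG : {set W * W}) a b u w phi x :
  thru EH EG a b u w phi -> x != a -> x != b -> (phi x != u) && (phi x != w).
Proof.
case/and3P=> /is_embP[hi _] /eqP ha /eqP hb xa xb.
by rewrite -ha -hb !(inj_eq hi) xa xb.
Qed.

Lemma greedy (V W : finType) (EH : {set V * V}) (EG : {set W * W}) (a b : V) (u w : W) (s : nat) :
  simple_graph EH -> (a, b) \in EH -> (s + 2) * #|V| + 2 <= #|W| ->
  forall j, j <= s ->
  (exists Y : {set W}, [/\ #|Y| <= j * #|V|, u \notin Y, w \notin Y &
      forall phi, thru EH EG a b u w phi -> hitsN EH Y phi])
  \/ (exists phis : nat -> {ffun V -> W}, (forall i, i < j -> thru EH EG a b u w (phis i)) /\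
      (forall i i' x y, i < j -> i' < j -> i != i' -> x != a -> x != b -> phis i x != phis i' y)).
Proof.
move=> hsimp hab hW; elim=> [|j IH] hj.
  by right; exists (fun _ => [ffun=> u]); split.
case: (IH (ltnW hj)) => [[Y [hY hu hw hh]]|[phis [hth hdis]]].
  left; exists Y; split => //; apply: leq_trans hY _; rewrite leq_mul2r leqnSn orbT //.
pose Y := [set y | [exists i : 'I_j, exists x, phis i x == y] && (y != u) && (y != w)].
have hY : #|Y| <= j * #|V|.
  apply: leq_trans (_ : #|[set phis (nat_of_ord p.1) p.2 | p : 'I_j * V]| <= _).
    apply: subset_leq_card; apply/subsetP => y; rewrite inE => /andP[/andP[/existsP[i /existsP[x /eqP <-]]] _] _.
    by apply/imsetP; exists (i, x).
  by apply: leq_trans (leq_imset_card _ _) _; rewrite card_prod card_ord.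
have hYu : u \notin Y by rewrite inE eqxx !andbF.
have hYw : w \notin Y by rewrite inE eqxx !andbF.
case: (boolP [forall phi, thru EH EG a b u w phi ==> hitsN EH Y phi]) => hall.
  left; exists Y; split => //.
    by apply: leq_trans hY _; rewrite leq_mul2r leqnSn orbT.
  by move=> phi hphi; move/forallP/(_ phi)/implyP: hall; apply.
move: hall; rewrite negb_forall => /existsP[phi]; rewrite negb_imply => /andP[hphi hnh].
have [phi' [heq [hout hinj']]] : exists phi' : {ffun V -> W}, (forall x, x \in NH EH -> phi' x = phi x) /\
    (forall x, x \notin NH EH -> phi' x \notin Y :|: [set u; w]) /\ injective phi'.
  apply: extend_emb.
    apply: leq_trans (_ : j * #|V| + 2 + 2 * #|V| <= _).
      rewrite leq_add2r (leq_trans (leq_card_setU _ _)) // leq_add // cards2; by case: (u != w).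
    apply: leq_trans hW; rewrite mulnDl.
    have := leq_mul (ltnW hj) (leqnn #|V|); lia.
  by case/and3P: hphi => /is_embP[hi _] _ _ x y _ _; apply: hi.
have haN : a \in NH EH by apply: NH_l hab.
have hbN : b \in NH EH by apply: (NH_l (y:=a)); apply: simple_sym.
have hth' : thru EH EG a b u w phi'.
  case/and3P: hphi => /is_embP[_ he] ha hb.
  apply/and3P; split; last 1 first; try by rewrite heq.
  apply: is_embI => // x y hxy.
  rewrite !heq; first exact: he.
    by apply: (NH_l (y:=x)); apply: simple_sym.
  exact: NH_l hxy.
have hnY : forall x, phi' x \notin Y.
  move=> x; case: (boolP (x \in NH EH)) => hx.
    rewrite heq //; apply: contra hnh => h; apply/existsP; exists x; rewrite hx; done.
  by move: (hout x hx); rewrite inE negb_or => /andP[].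
have inY : forall i x, i < j -> x != a -> x != b -> phis i x \in Y.
  move=> i x hi xa xb; rewrite inE; have /andP[-> ->] := thru_ne (hth i hi) xa xb.
  by rewrite !andbT; apply/existsP; exists (Ordinal hi); apply/existsP; exists x.
right; exists (fun i => if i == j then phi' else phis i); split.
  move=> i; rewrite ltnS leq_eqVlt; have [->|ne] := eqVneq i j; first by move=> _; exact: hth'.
  move=> hi; exact: (hth i hi).
move=> i i' x y; rewrite !ltnS (leq_eqVlt i) (leq_eqVlt i').
have [->|ne] := eqVneq i j; have [->|ne'] := eqVneq i' j.
- by move=> _ _ /eqP.
- move=> _ hi' _ xa xb; have := hnY x; apply: contra => /eqP e.
  have /andP[h1 h2] := thru_ne hth' xa xb.
  rewrite inE h1 h2 !andbT.
  by apply/existsP; exists (Ordinal hi'); apply/existsP; exists y; rewrite e.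
- move=> hi _ _ xa xb; have := inY i x hi xa xb; apply: contraL => /eqP ->; exact: hnY.
- move=> hi hi'; exact: hdis.
Qed.

Lemma glue_contains (V W : finType) (EH : {set V * V}) (EG : {set W * W}) (a b : V) (u w : W)
  (s : nat) (phis : nat -> {ffun V -> W}) :
  (forall i, i < s -> thru EH EG a b u w (phis i)) ->
  (forall i i' x y, i < s -> i' < s -> i != i' -> x != a -> x != b -> phis i x != phis i' y) ->
  contains EG (glueE s a b EH).
Proof.
move=> hth hdis.
have hemb : forall i, i < s -> injective (phis i) /\
    forall x y, (x, y) \in EH -> (phis i x, phis i y) \in EG.
  by move=> i hi; case/and3P: (hth i hi) => /is_embP.
have ha : forall i, i < s -> phis i a = u by move=> i hi; case/and3P: (hth i hi) => _ /eqP.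
have hb : forall i, i < s -> phis i b = w by move=> i hi; case/and3P: (hth i hi) => _ _ /eqP.
pose psi := [ffun v : glueV s a b => phis (val (val v).1) (val v).2].
have hpsi : is_emb (glueE s a b EH) EG psi.
  apply: is_embI.
    move=> [[i x] h1] [[j y] h2]; rewrite !ffunE /= => e.
    apply: val_inj => /=.
    have [eij|nij] := eqVneq (val i) (val j).
      have ej : i = j by apply: val_inj.
      subst j; congr pair; apply: (proj1 (hemb i (ltn_ord i))); exact: e.
    exfalso.
    case: (boolP ((x != a) && (x != b))) => hx.
      case/andP: hx => xa xb; have := hdis i j x y (ltn_ord i) (ltn_ord j) nij xa xb.
      by rewrite e eqxx.
    move: h1; rewrite /glue_canon /= (negbTE hx) /= => /eqP i0.
    case: (boolP ((y != a) && (y != b))) => hy.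
      case/andP: hy => ya yb; have := hdis j i y x (ltn_ord j) (ltn_ord i) _ ya yb.
      by rewrite eq_sym nij -e eqxx => /(_ isT).
    move: h2; rewrite /glue_canon /= (negbTE hy) /= => /eqP j0.
    by move/eqP: nij; apply; change (nat_of_ord i = nat_of_ord j); rewrite i0 j0.
  move=> [[i x] h1] [[j y] h2]; rewrite inE !ffunE /= => /andP[hxy hor].
  have hi := ltn_ord i; have hj := ltn_ord j.
  case/orP: hor => [/eqP eij|/orP[/eqP xa|/orP[/eqP xb|/orP[/eqP ya|/eqP yb]]]].
  - subst j; exact: (proj2 (hemb i hi)).
  - subst x; rewrite (ha i hi) -(ha j hj); exact: (proj2 (hemb j hj)).
  - subst x; rewrite (hb i hi) -(hb j hj); exact: (proj2 (hemb j hj)).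
  - subst y; rewrite (ha j hj) -(ha i hi); exact: (proj2 (hemb i hi)).
  - subst y; rewrite (hb j hj) -(hb i hi); exact: (proj2 (hemb i hi)).
rewrite /contains /ncopies card_gt0; apply/set0Pn; exists psi; by rewrite inE.
Qed.

Definition goodY (V W : finType) (EH : {set V * V}) (EG : {set W * W}) (a b : V) (s : nat)
  (u w : W) (Y : {set W}) : bool :=
  [&& #|Y| <= s * #|V|, u \notin Y, w \notin Y &
      [forall phi, thru EH EG a b u w phi ==> hitsN EH Y phi]].

Definition Yf (V W : finType) (EH : {set V * V}) (EG : {set W * W}) (a b : V) (s : nat)
  (e : W * W) : {set W} :=
  odflt set0 [pick Y | goodY EH EG a b s e.1 e.2 Y].

Lemma Yf_good (V W : finType) (EH : {set V * V}) (EG : {set W * W}) (a b : V) (s : nat) (u w : W) :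
  simple_graph EH -> (a, b) \in EH -> (s + 2) * #|V| + 2 <= #|W| ->
  ~~ contains EG (glueE s a b EH) -> goodY EH EG a b s u w (Yf EH EG a b s (u, w)).
Proof.
move=> hs hab hW hC; rewrite /Yf /=.
case: pickP => [Y //|hno].
case: (greedy EG u w hs hab hW (leqnn s)) => [[Y [h1 h2 h3 h4]]|[phis [h1 h2]]].
  have := hno Y; rewrite /goodY h1 h2 h3 /=.
  suff -> : [forall phi, thru EH EG a b u w phi ==> hitsN EH Y phi] by [].
  by apply/forallP => phi; apply/implyP; apply: h4.
by rewrite (glue_contains h1 h2) in hC.
Qed.

Lemma card_sumb (T : finType) (A : {set T}) : #|A| = \sum_(e : T) (e \in A : nat).
Proof.
rewrite -sum1_card big_mkcond /=.
by apply: eq_bigr => e _; case: (e \in A).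
Qed.

Lemma dense_sub (V W : finType) (EH : {set V * V}) (EG : {set W * W}) (a b : V) (s : nat) :
  simple_graph EH -> (a, b) \in EH -> simple_graph EG -> (s + 2) * #|V| + 2 <= #|W| ->
  ~~ contains EG (glueE s a b EH) ->
  exists E' : {set W * W}, [/\ simple_graph E', ~~ contains E' EH &
     #|EG| <= #|E'| * 2 ^ (2 * (s * #|V|) + 2)].
Proof.
move=> hs hab hG hW hC.
have hY := fun u w => @Yf_good V W EH EG a b s u w hs hab hW hC.
pose Z (e : W * W) := Yf EH EG a b s (e.1, e.2) :|: Yf EH EG a b s (e.2, e.1).
pose Ep (S : {set W}) := [set e in EG | [&& e.1 \in S, e.2 \in S & [disjoint Z e & S]]].
have Zsym : forall x y, Z (y, x) = Z (x, y) by move=> x y; rewrite /Z setUC.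
have hsimp : forall S, simple_graph (Ep S).
  move=> S; apply/andP; split.
    apply/forallP => x; rewrite inE; apply/negP => /andP[h _].
    by move: (simple_irr x hG); rewrite h.
  apply/forallP => x; apply/forallP => y; apply/implyP; rewrite !inE /= => /andP[h /and3P[h1 h2 h3]].
  by rewrite (simple_sym hG h) h1 h2 Zsym h3.
have hfree : forall S, ~~ contains (Ep S) EH.
  move=> S; apply/negP; rewrite /contains /ncopies card_gt0 => /set0Pn[phi].
  rewrite inE => /is_embP[hi he].
  have he' : forall x y, (x, y) \in EH -> (phi x, phi y) \in EG.
    by move=> x y /he; rewrite inE => /andP[].
  have hth : thru EH EG a b (phi a) (phi b) phi.
    by rewrite /thru !eqxx !andbT; apply: is_embI.
  have hh : hitsN EH (Yf EH EG a b s (phi a, phi b)) phi.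
    by case/and4P: (hY (phi a) (phi b)) => _ _ _ /forallP/(_ phi)/implyP; apply.
  move: hh; rewrite /hitsN => /existsP[x /andP[hx hxY]].
  have := he _ _ hab; rewrite inE /= => /andP[_ /and3P[_ _ hdis]].
  move: (hx); rewrite inE => /existsP[y hxy].
  have := he _ _ hxy; rewrite inE /= => /andP[_ /and3P[hxS _ _]].
  have hxZ : phi x \in Z (phi a, phi b) by rewrite /Z inE hxY.
  by rewrite (disjointFr hdis hxZ) in hxS.
pose D := 2 ^ (2 * (s * #|V|) + 2).
have hcount : forall e, e \in EG -> 2 ^ #|W| <= #|[set S | e \in Ep S]| * D.
  case=> u w he.
  have [hu1 hu2] : u \notin Z (u, w) /\ w \notin Z (u, w).
    case/and4P: (hY u w) => _ h1 h2 _; case/and4P: (hY w u) => _ h3 h4 _.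
    by rewrite /Z /= !inE !negb_or h1 h2 h3 h4.
  pose U := [set u; w].
  pose B := ~: (Z (u, w) :|: U).
  have hinj : {in powerset B &, injective (fun T => T :|: U)}.
    move=> T1 T2; rewrite !inE => /subsetP s1 /subsetP s2 e.
    apply/setP => x; case: (boolP (x \in U)) => hxU.
      apply/idP/idP => [/s1|/s2]; rewrite inE inE negb_or hxU andbF //.
    move/setP: e => /(_ x); rewrite in_setU [in RHS]in_setU.
    by move: hxU; rewrite /U => /negbTE ->; rewrite !orbF.
  have hsub : [set T :|: U | T in powerset B] \subset [set S | (u, w) \in Ep S].
    apply/subsetP => S /imsetP[T hT ->]; rewrite inE /Ep inE he /= /U !in_setU !in_set1 !eqxx !orbT /=.
    move: hT; rewrite inE => /subsetP hT.
    apply/pred0P => x /=; apply/negbTE; apply/negP => /andP[hxZ hxTU].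
    move: hxTU; rewrite in_setU => /orP[/hT|]; first by rewrite inE in_setU hxZ.
    rewrite /U in_setU !in_set1 => /orP[/eqP ex|/eqP ex]; subst x.
      by rewrite hxZ in hu1.
    by rewrite hxZ in hu2.
  have h1 := subset_leq_card hsub; rewrite (card_in_imset hinj) card_powerset in h1.
  have hc := cardsC (Z (u, w) :|: U).
  have hZU : #|Z (u, w) :|: U| <= 2 * (s * #|V|) + 2.
    apply: leq_trans (leq_card_setU _ _) _; apply: leq_add.
      apply: leq_trans (leq_card_setU _ _) _; rewrite mul2n -addnn; apply: leq_add.
        by case/and4P: (hY u w).
      by case/and4P: (hY w u).
    by rewrite cards2; case: (u != w).
  rewrite -hc addnC expnD; apply: leq_mul => //.
  by rewrite leq_exp2l.
pose f S := #|Ep S|.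
case: (@arg_maxnP _ set0 predT f isT) => S0 _ hmax.
exists (Ep S0); split => //.
have hsum : \sum_(S : {set W}) f S = \sum_(e in EG) #|[set S | e \in Ep S]|.
  rewrite /f.
  transitivity (\sum_(S : {set W}) \sum_(e : W * W) (e \in Ep S : nat)).
    by apply: eq_bigr => S _; apply: card_sumb.
  rewrite exchange_big /= [RHS]big_mkcond /=; apply: eq_bigr => e _.
  case: (boolP (e \in EG)) => heG /=.
    rewrite card_sumb; apply: eq_bigr => S _; rewrite inE; done.
  by apply: big1 => S _; rewrite inE (negbTE heG).
have hle : \sum_(S : {set W}) f S <= 2 ^ #|W| * f S0.
  apply: leq_trans (_ : \sum_(S : {set W}) f S0 <= _).
    by apply: leq_sum => S _; apply: hmax.
  by rewrite sum_nat_const cardT -cardE -cardsT -powersetT card_powerset cardsT.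
have hge : #|EG| * 2 ^ #|W| <= (\sum_(S : {set W}) f S) * D.
  rewrite hsum -sum_nat_const.
  rewrite (big_distrl (times := muln) (plus := addn)) /=.
  by apply: leq_sum => e he; apply: hcount.
have : 2 ^ #|W| * #|EG| <= 2 ^ #|W| * (f S0 * D).
  rewrite mulnC mulnA; apply: leq_trans hge _; by rewrite leq_mul2r hle orbT.
by rewrite leq_pmul2l ?expn_gt0.
Qed.

Lemma iota_canon (V : finType) (s : nat) (a b : V) (hs : 0 < s) (x : V) :
  glue_canon a b (Ordinal hs, x).
Proof. by rewrite /glue_canon /= eqxx orbT. Qed.

Lemma contains_sub (V W : finType) (EH : {set V * V}) (E : {set W * W}) (s : nat) (a b : V) :
  0 < s -> contains E (glueE s a b EH) -> contains E EH.
Proof.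
move=> hs; rewrite /contains /ncopies !card_gt0 => /set0Pn[psi]; rewrite inE => /is_embP[hi he].
pose iota (x : V) : glueV s a b := Sub (Ordinal hs, x) (iota_canon a b hs x).
apply/set0Pn; exists [ffun x => psi (iota x)]; rewrite inE; apply: is_embI.
  move=> x y; rewrite !ffunE => /hi /(congr1 val) /= [] //.
move=> x y hxy; rewrite !ffunE; apply: he.
by rewrite inE /= hxy.
Qed.

Lemma turan_mono (V : finType) (EH : {set V * V}) (s : nat) (a b : V) (n : nat) :
  0 < s -> turan EH n <= turan (glueE s a b EH) n.
Proof.
move=> hs; rewrite /turan; apply/bigmax_leqP => E /andP[hE hfree].
apply: leq_bigmax_cond; rewrite hE /=; apply: contra hfree; exact: contains_sub.
Qed.

Lemma nedges_le (T : finType) (E : {set T * T}) : nedges E * 2 <= #|E|.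
Proof. exact: leq_divM. Qed.

Lemma card_le_nedges (T : finType) (E : {set T * T}) : #|E| <= nedges E * 2 + 1.
Proof. have := ltn_ceil #|E| (isT : 0 < 2); rewrite /nedges mulSn; lia. Qed.

Local Open Scope ring_scope.

Lemma main_bound (R : realType) (V : finType) (EH : {set V * V})
    (alpha : R) (s : nat) (a b : V) (CH beta : R) (n : nat) (E : {set 'I_n * 'I_n}) :
  simple_graph EH -> 0 <= alpha -> 0 < CH -> 0 < beta -> ES_good_with EH alpha CH beta ->
  (a, b) \in EH -> simple_graph E -> ~~ contains E (glueE s a b EH) ->
  (nedges E)%:R <= ((2 ^ (2 * (s * #|V|) + 2))%:R * (2 * CH + 1)
       + (((s + 2) * #|V| + 2) * ((s + 2) * #|V| + 2))%:R) * powR (n%:R) (1 + alpha).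
Proof.
move=> hs ha0 hCH hbeta hES hab hE hfree.
set D := (2 ^ (2 * (s * #|V|) + 2))%N.
set N0 := ((s + 2) * #|V| + 2)%N.
have hP0 : 0 <= powR (n%:R) (1 + alpha) by apply: powR_ge0.
have hD0 : 0 <= D%:R * (2 * CH + 1) :> R.
  by apply: mulr_ge0; [apply: ler0n | lra].
have hcardE : (#|E| <= n * n)%N.
  by apply: leq_trans (max_card _) _; rewrite card_prod card_ord.
case: (posnP n) => hn.
  have -> : nedges E = 0%N.
    have : (#|E| <= 0)%N by apply: leq_trans hcardE _; rewrite hn.
    by rewrite leqn0 /nedges => /eqP ->.
  by rewrite mulr_ge0 // addr_ge0 // ler0n.
move: hP0; case: n hn E hcardE hES hfree hE => [//|n] _ E hcardE hES hfree hE hP0.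
set P := powR (n.+1%:R) (1 + alpha).
have hP1 : n.+1%:R <= P.
  apply: le1r_powR; first by rewrite ler1n.
  lra.
have hP1' : 1 <= P by apply: le_trans hP1; rewrite ler1n.
case: (ltnP n.+1 N0) => hN.
  apply: le_trans (_ : (N0 * N0)%:R <= _).
    rewrite ler_nat; apply: leq_trans (leq_div _ _) _; apply: leq_trans hcardE _.
    by apply: leq_mul; apply: ltnW.
  apply: le_trans (_ : (N0 * N0)%:R * P <= _).
    by rewrite ler_peMr // ler0n.
  by rewrite mulrDl lerDr mulr_ge0.
have hW : (N0 <= #|'I_n.+1|)%N by rewrite card_ord.
have [E' [hE' hfree' hcard]] := dense_sub hs hab hE hW hfree.
have hne' : (nedges E')%:R < CH * P.
  rewrite ltNge; apply/negP => hge.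
  have := hES n.+1 E' isT hE' hge.
  have -> : ncopies EH E' = 0%N.
    by move: hfree'; rewrite /contains lt0n negbK => /eqP.
  apply/negP; rewrite -ltNge.
  apply: mulr_gt0; last by apply: exprn_gt0; rewrite ltr0n.
  apply: mulr_gt0 => //; apply: exprn_gt0; apply: divr_gt0; last by apply: exprn_gt0; rewrite ltr0n.
  apply: lt_le_trans hge; apply: mulr_gt0 => //; apply: lt_le_trans hP1; rewrite ltr0n.
  done.
have h1 : ((nedges E) * 2 <= (nedges E' * 2 + 1) * D)%N.
  apply: leq_trans (nedges_le E) _; apply: leq_trans hcard _.
  by rewrite leq_mul2r card_le_nedges orbT.
have h1r : (nedges E)%:R * 2 <= ((nedges E')%:R * 2 + 1) * D%:R :> R.
  by move: h1; rewrite -(ler_nat R) natrM natrM natrD natrM.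
have hDp : 0 < D%:R :> R by rewrite ltr0n expn_gt0.
have h2 : ((nedges E')%:R * 2 + 1) * D%:R <= (CH * P * 2 + P) * D%:R :> R.
  rewrite ler_pM2r //; apply: lerD; last by [].
  by rewrite ler_pM2r //; apply: ltW.
have h3 : (nedges E)%:R <= D%:R * (2 * CH + 1) * P.
  have : (nedges E)%:R * 2 <= (CH * P * 2 + P) * D%:R := le_trans h1r h2.
  have hne0 : 0 <= (nedges E)%:R :> R by apply: ler0n.
  nra.
apply: le_trans h3 _; rewrite [X in _ <= X]mulrDl lerDl mulr_ge0 // ler0n.
Qed.

Unset Implicit Arguments.

Theorem corollary1p11 (R : realType) (V : finType) (EH : {set V * V})
    (alpha : R) (s : nat) (a b : V) :
  simple_graph EH -> 0 <= alpha -> alpha < 1 -> ES_good EH alpha ->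
  (0 < s)%N -> (a, b) \in EH ->
  exists C : R, forall n : nat,
    (turan EH n <= turan (glueE s a b EH) n)%N /\
    (turan (glueE s a b EH) n)%:R <= C * powR (n%:R) (1 + alpha).
Proof.
move=> hs ha0 ha1 [CH [beta [hCH [hbeta hES]]]] hs0 hab.
eexists => n; split; first exact: turan_mono.
rewrite /turan.
set A := [pred E : {set 'I_n * 'I_n} | simple_graph E && ~~ contains E (glueE s a b EH)].
case: (pickP A) => [E0 hE0|hno].
  have hA : (0 < #|A|)%N by apply/card_gt0P; exists E0.
  have [E hE ->] := @eq_bigmax_cond _ A (@nedges _) hA.
  move: hE; rewrite /A inE => /andP[hE hfree].
  exact: (main_bound hs ha0 hCH hbeta hES hab hE hfree).
rewrite big_pred0 //.
apply: mulr_ge0; last exact: powR_ge0.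
by apply: addr_ge0; [apply: mulr_ge0; [apply: ler0n|lra]|apply: ler0n].
Qed.
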